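(* Let $0<t_1<t_2<t_3<t_4<t_5$ be real numbers and let $p_i=(t_i,t_i^2,t_i^3,t_i^4)\in\mathbb{R}^4$ for $1\le i\le 5$. Then the unique $3$-sphere in $\mathbb{R}^4$ passing through $p_1,\dots,p_5$ has the following property: for every $t\in(t_1,t_2)\cup(t_3,t_4)\cup(t_5,\infty)$, the point $(t,t^2,t^3,t^4)$ lies strictly outside the sphere, i.e., its distance from the center of the sphere is strictly greater than the radius.
   Context: The moment curve in $\mathbb{R}^d$ is the curve $t\mapsto(t,t^2,\dots,t^d)$ for $t>0$. A $3$-sphere in $\mathbb{R}^4$ is the set of points at a fixed distance (the radius) from a fixed point (the center). *)

(* Defs.v *)
From Stdlib Require Import Reals.
Open Scope R_scope.

Definition R4 : Type := (R * R * R * R)%type.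

Definition moment (t : R) : R4 := (t, t ^ 2, t ^ 3, t ^ 4).

Definition dist4 (p q : R4) : R :=
  match p, q with
  | (p1, p2, p3, p4), (q1, q2, q3, q4) =>
      sqrt ((p1 - q1) ^ 2 + (p2 - q2) ^ 2 + (p3 - q3) ^ 2 + (p4 - q4) ^ 2)
  end.

Definition on_sphere (c : R4) (r : R) (p : R4) : Prop := dist4 p c = r.

(* Main.v *)
Require Import Defs.
From Stdlib Require Import Reals Lra Psatz.
Open Scope R_scope.

Lemma zero_of_mul (a d : R) : d <> 0 -> a * d = 0 -> a = 0.
Proof. intros Hd H. destruct (Rmult_integral _ _ H); [assumption| contradiction]. Qed.

Lemma p0 (a0 x1 : R) : a0 = 0 -> a0 = 0.
Proof. auto. Qed.

Lemma p1 (a0 a1 x1 x2 : R) : x1 < x2 ->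
  a0 + a1*x1 = 0 -> a0 + a1*x2 = 0 -> a0 = 0 /\ a1 = 0.
Proof.
  intros H12 E1 E2.
  assert (a1 = 0).
  { apply (zero_of_mul _ (x2 - x1)); [lra|].
    replace (a1*(x2-x1)) with ((a0+a1*x2) - (a0+a1*x1)) by ring. lra. }
  subst. split; lra.
Qed.

Lemma p2 (a0 a1 a2 x1 x2 x3 : R) : x1 < x2 -> x2 < x3 ->
  a0 + a1*x1 + a2*x1^2 = 0 -> a0 + a1*x2 + a2*x2^2 = 0 ->
  a0 + a1*x3 + a2*x3^2 = 0 -> a0 = 0 /\ a1 = 0 /\ a2 = 0.
Proof.
  intros H12 H23 E1 E2 E3.
  set (p := fun t => a0 + a1*t + a2*t^2) in *.
  set (q := fun t => (a1 + a2*x1) + a2*t).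
  assert (K : forall t, (t - x1) * q t = p t - p x1) by (intro; unfold p, q; ring).
  assert (Q2 : q x2 = 0).
  { apply (zero_of_mul _ (x2 - x1)); [lra|]. rewrite Rmult_comm, K.
    change (p x2 = 0) in E2. change (p x1 = 0) in E1. lra. }
  assert (Q3 : q x3 = 0).
  { apply (zero_of_mul _ (x3 - x1)); [lra|]. rewrite Rmult_comm, K.
    change (p x3 = 0) in E3. change (p x1 = 0) in E1. lra. }
  unfold q in Q2, Q3.
  destruct (p1 _ _ _ _ H23 Q2 Q3) as [A B].
  assert (a2 = 0) by lra. subst a2. assert (a1 = 0) by lra. subst a1.
  unfold p in E1. split; [lra|split; lra].
Qed.

Lemma p3 (a0 a1 a2 a3 x1 x2 x3 x4 : R) : x1 < x2 -> x2 < x3 -> x3 < x4 ->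
  a0 + a1*x1 + a2*x1^2 + a3*x1^3 = 0 -> a0 + a1*x2 + a2*x2^2 + a3*x2^3 = 0 ->
  a0 + a1*x3 + a2*x3^2 + a3*x3^3 = 0 -> a0 + a1*x4 + a2*x4^2 + a3*x4^3 = 0 ->
  a0 = 0 /\ a1 = 0 /\ a2 = 0 /\ a3 = 0.
Proof.
  intros H12 H23 H34 E1 E2 E3 E4.
  set (p := fun t => a0 + a1*t + a2*t^2 + a3*t^3) in *.
  set (q := fun t => (a1 + a2*x1 + a3*x1^2) + (a2 + a3*x1)*t + a3*t^2).
  assert (K : forall t, (t - x1) * q t = p t - p x1) by (intro; unfold p, q; ring).
  change (p x1 = 0) in E1.
  assert (Qi : forall t, x1 < t -> p t = 0 -> q t = 0).
  { intros t Ht Et. apply (zero_of_mul _ (t - x1)); [lra|]. rewrite Rmult_comm, K. lra. }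
  pose proof (Qi x2 H12 E2) as Q2.
  pose proof (Qi x3 ltac:(lra) E3) as Q3.
  pose proof (Qi x4 ltac:(lra) E4) as Q4.
  unfold q in Q2, Q3, Q4.
  destruct (p2 _ _ _ _ _ _ H23 H34 Q2 Q3 Q4) as [A [B C]].
  subst a3. assert (a2 = 0) by lra. subst a2. assert (a1 = 0) by lra. subst a1.
  unfold p in E1. lra.
Qed.

Lemma p4 (a0 a1 a2 a3 a4 x1 x2 x3 x4 x5 : R) :
  x1 < x2 -> x2 < x3 -> x3 < x4 -> x4 < x5 ->
  a0 + a1*x1 + a2*x1^2 + a3*x1^3 + a4*x1^4 = 0 ->
  a0 + a1*x2 + a2*x2^2 + a3*x2^3 + a4*x2^4 = 0 ->
  a0 + a1*x3 + a2*x3^2 + a3*x3^3 + a4*x3^4 = 0 ->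
  a0 + a1*x4 + a2*x4^2 + a3*x4^3 + a4*x4^4 = 0 ->
  a0 + a1*x5 + a2*x5^2 + a3*x5^3 + a4*x5^4 = 0 ->
  a0 = 0 /\ a1 = 0 /\ a2 = 0 /\ a3 = 0 /\ a4 = 0.
Proof.
  intros H12 H23 H34 H45 E1 E2 E3 E4 E5.
  set (p := fun t => a0 + a1*t + a2*t^2 + a3*t^3 + a4*t^4) in *.
  set (q := fun t => (a1 + a2*x1 + a3*x1^2 + a4*x1^3) + (a2 + a3*x1 + a4*x1^2)*t
                     + (a3 + a4*x1)*t^2 + a4*t^3).
  assert (K : forall t, (t - x1) * q t = p t - p x1) by (intro; unfold p, q; ring).
  change (p x1 = 0) in E1.
  assert (Qi : forall t, x1 < t -> p t = 0 -> q t = 0).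
  { intros t Ht Et. apply (zero_of_mul _ (t - x1)); [lra|]. rewrite Rmult_comm, K. lra. }
  pose proof (Qi x2 H12 E2) as Q2.
  pose proof (Qi x3 ltac:(lra) E3) as Q3.
  pose proof (Qi x4 ltac:(lra) E4) as Q4.
  pose proof (Qi x5 ltac:(lra) E5) as Q5.
  unfold q in Q2, Q3, Q4, Q5.
  destruct (p3 _ _ _ _ _ _ _ _ H23 H34 H45 Q2 Q3 Q4 Q5) as [A [B [C D]]].
  subst a4. assert (a3 = 0) by lra. subst a3. assert (a2 = 0) by lra. subst a2.
  assert (a1 = 0) by lra. subst a1.
  unfold p in E1. lra.
Qed.

Definition D4 (c : R4) (t : R) : R :=
  match c with (c1, c2, c3, c4) =>
    (t - c1) ^ 2 + (t ^ 2 - c2) ^ 2 + (t ^ 3 - c3) ^ 2 + (t ^ 4 - c4) ^ 2 end.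

Lemma dist4_moment c t : dist4 (moment t) c = sqrt (D4 c t).
Proof. destruct c as [[[c1 c2] c3] c4]. reflexivity. Qed.

Lemma D4_nonneg c t : 0 <= D4 c t.
Proof. destruct c as [[[c1 c2] c3] c4]. unfold D4.
  pose proof (pow2_ge_0 (t - c1)). pose proof (pow2_ge_0 (t^2 - c2)).
  pose proof (pow2_ge_0 (t^3 - c3)). pose proof (pow2_ge_0 (t^4 - c4)). lra. Qed.

Theorem mainTheorem6 (t1 t2 t3 t4 t5 : R) :
  0 < t1 -> t1 < t2 -> t2 < t3 -> t3 < t4 -> t4 < t5 ->
  exists (c : R4) (r : R),
    0 < r /\
    on_sphere c r (moment t1) /\ on_sphere c r (moment t2) /\
    on_sphere c r (moment t3) /\ on_sphere c r (moment t4) /\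
    on_sphere c r (moment t5) /\
    (forall (c' : R4) (r' : R), 0 < r' ->
       on_sphere c' r' (moment t1) -> on_sphere c' r' (moment t2) ->
       on_sphere c' r' (moment t3) -> on_sphere c' r' (moment t4) ->
       on_sphere c' r' (moment t5) -> c' = c /\ r' = r) /\
    (forall t : R,
       (t1 < t < t2 \/ t3 < t < t4 \/ t5 < t) ->
       dist4 (moment t) c > r).
Proof.
  intros H1 H12 H23 H34 H45.
  set (e1 := t1 + t2 + t3 + t4 + t5).
  set (e2 := t1*t2 + t1*t3 + t1*t4 + t1*t5 + t2*t3 + t2*t4 + t2*t5 + t3*t4 + t3*t5 + t4*t5).
  set (e3 := t1*t2*t3 + t1*t2*t4 + t1*t2*t5 + t1*t3*t4 + t1*t3*t5 + t1*t4*t5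
            + t2*t3*t4 + t2*t3*t5 + t2*t4*t5 + t3*t4*t5).
  set (e4 := t1*t2*t3*t4 + t1*t2*t3*t5 + t1*t2*t4*t5 + t1*t3*t4*t5 + t2*t3*t4*t5).
  set (e5 := t1*t2*t3*t4*t5).
  set (q2 := e1).
  set (q1 := 1 + e1^2 - e2).
  set (q0 := e1 * q1 - e2 * e1 + e3).
  set (k4 := - e1 * q0 + e2 * q1 - e3 * q2 + e4).
  set (k3 := e2 * q0 - e3 * q1 + e4 * q2 - e5).
  set (k2 := - e3 * q0 + e4 * q1 - e5 * q2).
  set (k1 := e4 * q0 - e5 * q1).
  set (k0 := - e5 * q0).
  set (c1 := - k1 / 2). set (c2 := (1 - k2) / 2). set (c3 := - k3 / 2).
  set (c4 := (1 - k4) / 2).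
  set (R2 := c1^2 + c2^2 + c3^2 + c4^2 - k0).
  set (Q := fun t => t^3 + q2 * t^2 + q1 * t + q0).
  set (c := (c1, c2, c3, c4) : R4).
  assert (KEY : forall t, D4 c t - R2 =
     (t - t1) * (t - t2) * (t - t3) * (t - t4) * (t - t5) * Q t).
  { intro t. unfold D4, c, R2, Q, c1, c2, c3, c4, k0, k1, k2, k3, k4, q0, q1, q2,
      e1, e2, e3, e4, e5. field. }
  assert (e1p : 0 < e1) by (unfold e1; lra).
  assert (s2p : 0 < e1^2 - 2*e2).
  { replace (e1^2 - 2*e2) with (t1^2+t2^2+t3^2+t4^2+t5^2) by (unfold e1, e2; ring). nra. }
  assert (e3p : 0 < e3).
  { assert (0 < t2) by lra. assert (0 < t3) by lra. assert (0 < t4) by lra.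
    assert (0 < t5) by lra.
    unfold e3. repeat apply Rplus_lt_0_compat; repeat apply Rmult_lt_0_compat; lra. }
  assert (e5p : 0 < e5).
  { assert (0 < t2) by lra. assert (0 < t3) by lra. assert (0 < t4) by lra.
    assert (0 < t5) by lra. unfold e5.
    repeat apply Rmult_lt_0_compat; lra. }
  assert (q0p : 0 < q0).
  { replace q0 with (e1 + e1 * (e1^2 - 2*e2) + e3) by (unfold q0, q1; ring). nra. }
  assert (q1p : 0 < q1).
  { unfold q1. assert (0 < e1^2 - e2).
    { replace (e1^2 - e2) with ((t1^2+t2^2+t3^2+t4^2+t5^2) + e2) by (unfold e1, e2; ring).
      assert (0 <= e2).
      { assert (0 < t2) by lra. assert (0 < t3) by lra. assert (0 < t4) by lra.
        assert (0 < t5) by lra. unfold e2. nra. }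
      nra. }
    lra. }
  assert (Qp : forall t, 0 < t -> 0 < Q t).
  { intros t Ht. unfold Q, q2. assert (0 < t^3) by (apply pow_lt; lra).
    assert (0 < t^2) by (apply pow_lt; lra). nra. }
  assert (R2p : 0 < R2).
  { unfold R2, k0. nra. }
  exists c, (sqrt R2).
  assert (ON : forall t, D4 c t = R2 -> on_sphere c (sqrt R2) (moment t)).
  { intros t Ht. unfold on_sphere. rewrite dist4_moment, Ht. reflexivity. }
  assert (Z : forall t, (t - t1) * (t - t2) * (t - t3) * (t - t4) * (t - t5) = 0 ->
             D4 c t = R2).
  { intros t Ht. pose proof (KEY t) as K. rewrite Ht in K. lra. }
  split; [apply sqrt_lt_R0; lra|].
  split; [apply ON, Z; ring|].
  split; [apply ON, Z; ring|].
  split; [apply ON, Z; ring|].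
  split; [apply ON, Z; ring|].
  split; [apply ON, Z; ring|].
  split.
  - intros [[[d1 d2] d3] d4] r' Hr' F1 F2 F3 F4 F5.
    unfold on_sphere in F1, F2, F3, F4, F5. rewrite dist4_moment in F1, F2, F3, F4, F5.
    assert (G : forall t, sqrt (D4 (d1, d2, d3, d4) t) = r' ->
        D4 (d1, d2, d3, d4) t = r'^2).
    { intros t Ht. rewrite <- Ht. rewrite pow2_sqrt; [reflexivity| apply D4_nonneg]. }
    apply G in F1, F2, F3, F4, F5.
    set (a0 := (d1^2 + d2^2 + d3^2 + d4^2 - r'^2) - (c1^2 + c2^2 + c3^2 + c4^2 - R2)).
    set (a1 := -2*d1 + 2*c1). set (a2 := -2*d2 + 2*c2). set (a3 := -2*d3 + 2*c3).
    set (a4 := -2*d4 + 2*c4).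
    assert (DIFF : forall t, D4 (d1, d2, d3, d4) t - r'^2 - (D4 c t - R2)
       = a0 + a1*t + a2*t^2 + a3*t^3 + a4*t^4).
    { intro t. unfold D4, c, a0, a1, a2, a3, a4. ring. }
    assert (V : forall t, D4 (d1, d2, d3, d4) t = r'^2 -> D4 c t = R2 ->
       a0 + a1*t + a2*t^2 + a3*t^3 + a4*t^4 = 0).
    { intros t A B. rewrite <- DIFF. lra. }
    assert (Ci : forall t, (t - t1) * (t - t2) * (t - t3) * (t - t4) * (t - t5) = 0 ->
       D4 (d1, d2, d3, d4) t = r'^2 ->
       a0 + a1*t + a2*t^2 + a3*t^3 + a4*t^4 = 0).
    { intros t A B. apply V; [exact B| apply Z, A]. }
    destruct (p4 a0 a1 a2 a3 a4 t1 t2 t3 t4 t5 H12 H23 H34 H45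
      (Ci t1 ltac:(ring) F1) (Ci t2 ltac:(ring) F2) (Ci t3 ltac:(ring) F3)
      (Ci t4 ltac:(ring) F4) (Ci t5 ltac:(ring) F5)) as [A0 [A1 [A2 [A3 A4]]]].
    unfold a1, a2, a3, a4 in A1, A2, A3, A4.
    assert (d1 = c1) by lra. assert (d2 = c2) by lra. assert (d3 = c3) by lra.
    assert (d4 = c4) by lra. subst d1 d2 d3 d4.
    unfold a0 in A0. split; [reflexivity|].
    assert (r'^2 = R2) by lra.
    rewrite <- H. rewrite sqrt_pow2; lra.
  - intros t Ht. rewrite dist4_moment. apply Rlt_gt. apply sqrt_lt_1; try lra.
    + apply D4_nonneg.
    + assert (0 < (t - t1) * (t - t2) * (t - t3) * (t - t4) * (t - t5) * Q t);
        [|pose proof (KEY t); lra].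
      apply Rmult_lt_0_compat; [|apply Qp; lra].
      destruct Ht as [[A B]|[[A B]|A]].
      * replace ((t - t1) * (t - t2) * (t - t3) * (t - t4) * (t - t5)) with
          ((t - t1) * ((t2 - t) * (t3 - t) * (t4 - t) * (t5 - t))) by ring.
        apply Rmult_lt_0_compat; [lra|].
        repeat apply Rmult_lt_0_compat; lra.
      * replace ((t - t1) * (t - t2) * (t - t3) * (t - t4) * (t - t5)) with
          ((t - t1) * (t - t2) * (t - t3) * ((t4 - t) * (t5 - t))) by ring.
        repeat apply Rmult_lt_0_compat; lra.
      * repeat apply Rmult_lt_0_compat; lra.
Qed.
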